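(* Let $h \ge 1$, $N_H \ge 1$, $f \ge 1$ be integers and let $R \in (0,1]$. Let the state matrix $(\mathbf{F}_1, \ldots, \mathbf{F}_h)$ of an IBF with $h$ hash functions, $N = h N_H$ cells and $f$ stored elements be chosen uniformly at random from $\mathcal{S}_{N_H,f}^h$, and let $Y$ be the number of elements extracted by the extraction process. Then the probability that the extraction fails to achieve extraction rate $R$, i.e. $\Pr(Y/f < R)$, satisfies $$\Pr\left(\frac{Y}{f} < R\right) \le 1 - \sum_{e = \lceil R f \rceil}^{f} \frac{\Theta(N_H, f, h, e)}{N_H^{h f}}.$$ Equivalently, for every integer $0 \le y \le f$, $\Pr(Y \ge y) \ge \sum_{e=y}^{f} \Theta(N_H, f, h, e)/N_H^{hf}$.
   Context: For integers $n, m \ge 0$, let $\mathcal{S}_{n,m}$ denote the set of all $n \times m$ binary matrices in which every column has Hamming weight exactly one (so $|\mathcal{S}_{n,m}| = n^m$; $\mathcal{S}_{n,0}$ consists of the single empty matrix, and $\mathcal{S}_{0,m} = \emptyset$ for $m \ge 1$). A binary matrix is called a stopping matrix if none of its rows has Hamming weight exactly one. Let $z(n, m)$ denote the number of matrices in $\mathcal{S}_{n,m}$ that are stopping matrices. The state matrix of an IBF with $h$ hash functions, $N = hN_H$ cells (partitioned into $h$ sub-filters of $N_H$ cells, the $i$-th hash function mapping into the $i$-th sub-filter) and $f$ inserted elements $x_1,\dots,x_f$ is the $h$-tuple $(\mathbf{F}_1,\dots,\mathbf{F}_h)$ with $\mathbf{F}_i \in \mathcal{S}_{N_H,f}$, where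 $\mathbf{F}_i$ has a $1$ in row $r$, column $j$ iff the $i$-th hash function maps $x_j$ to cell $r$ of the $i$-th sub-filter. Extraction (peeling) process: columns are removed simultaneously from all blocks; while there is some $i \in [h]$ and some row of $\mathbf{F}_i$ whose restriction to the not-yet-removed columns has Hamming weight exactly one, remove (extract) the column containing that unique $1$; stop when no block has such a row. The number of extracted elements is the number of removed columns (independent of the order of removals). For $e \in \mathbb{N}$, $\mathcal{T}_e$ is the set of vectors $\mathbf{b} \in \mathbb{N}^h$ with all entries in $\{0, \ldots, e\}$, and $\xi(\mathbf{b}) = \sum_i b_i$. The function $\Psi$ is defined by $\Psi(0, \mathbf{0}) = 1$, $\Psi(0, \mathbf{b}) = 0$ for $\mathbf{b} \ne \mathbf{0}$, and for $e \ge 1$: $\Psi(e, \mathbf{b}) = \prod_{i=1}^{h} \binom{e}{b_i} - \sum_{j=0}^{e-1} \binom{e}{j} \Psi(j, \mathbf{b})$. Finally $$\Theta(N_H, f, h, e) = \binom{f}{e} \sum_{\mathbf{b} \in \mathcal{T}_e \,:\, \xi(\mathbf{b}) \ge e} \left( \Psi(e, \mathbf{b}) \prod_{i=1}^{h} \left[ \binom{N_H}{b_i}\, b_i!\, z(N_H - b_i, f - b_i) \right] \right).$$ *)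

(* Defs.v *)
From HB Require Import structures.
From mathcomp Require Import all_boot all_order all_algebra.
From mathcomp Require Import reals.
Set Implicit Arguments. Unset Strict Implicit. Unset Printing Implicit Defensive.
Import Order.TTheory GRing.Theory Num.Theory.

Definition colw n m (M : 'M[bool]_(n, m)) (j : 'I_m) : nat := #|[set i | M i j]|.
Definition roww n m (M : 'M[bool]_(n, m)) (i : 'I_n) : nat := #|[set j | M i j]|.

Definition inS n m (M : 'M[bool]_(n, m)) : bool := [forall j, colw M j == 1].

Definition stopping n m (M : 'M[bool]_(n, m)) : bool := [forall i, roww M i != 1].

Definition z (n m : nat) : nat := #|[set M : 'M[bool]_(n, m) | inS M && stopping M]|.

Definition state h NH f := {ffun 'I_h -> 'M[bool]_(NH, f)}.
Definition inSh h NH f (F : state h NH f) : bool := [forall i, inS (F i)].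

(* Peeling: C is the set of not-yet-removed columns. Column j is extractable
   if some row r of some block F_i, restricted to C, has weight exactly one
   with its unique 1 in column j. *)
Definition extractable h NH f (F : state h NH f) (C : {set 'I_f}) (j : 'I_f) : bool :=
  (j \in C) &&
  [exists i : 'I_h, exists r : 'I_NH,
     F i r j && (#|[set j' in C | F i r j']| == 1)].

Definition peel_step h NH f (F : state h NH f) (C : {set 'I_f}) : {set 'I_f} :=
  if [pick j | extractable F C j] is Some j then C :\ j else C.

(* At most f removals are possible, so f iterations reach the end state. *)
Definition remaining h NH f (F : state h NH f) : {set 'I_f} :=
  iter f (peel_step F) setT.

Definition extracted h NH f (F : state h NH f) : nat := f - #|remaining F|.

(* Psi, defined literally by its recursion (strong recursion via the list of
   values Psi(0,b), ..., Psi(n,b)); b is given as a sequence of length h. *)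
Definition psi_next (b : seq nat) (e : nat) (s : seq int) : int :=
  (\prod_(bi <- b) ('C(e, bi))%:Z - \sum_(j < e) ('C(e, j))%:Z * nth 0 s j)%R.

Fixpoint psi_seq (b : seq nat) (n : nat) : seq int :=
  match n with
  | 0 => [:: if all (fun bi => bi == 0) b then 1%R else 0%R]
  | n'.+1 => let s := psi_seq b n' in rcons s (psi_next b n'.+1 s)
  end.

Definition Psi (e : nat) (b : seq nat) : int := nth 0%R (psi_seq b e) e.

(* Theta(N_H, f, h, e); T_e = vectors b in N^h with entries in {0..e},
   represented as {ffun 'I_h -> 'I_e.+1}. *)
Definition Theta (NH f h e : nat) : int :=
  (('C(f, e))%:Z *
   \sum_(b : {ffun 'I_h -> 'I_e.+1} | (e <= \sum_(i < h) (b i : nat))%N)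
     (Psi e [seq (b i : nat) | i <- enum 'I_h] *
      \prod_(i < h) ('C(NH, b i) * (b i)`! * z (NH - b i) (f - b i))%:Z))%R.

(* Main.v *)
Require Import Defs.
From HB Require Import structures.
From mathcomp Require Import all_boot all_order all_algebra.
From mathcomp Require Import reals.
From mathcomp Require Import zify.
Import Order.TTheory GRing.Theory Num.Theory.
Set Implicit Arguments. Unset Strict Implicit. Unset Printing Implicit Defensive.

Lemma extr_sub h NH f (F : state h NH f) (C : {set 'I_f}) j :
  extractable F setT j -> j \in C -> extractable F C j.
Proof.
case/andP=> _ /existsP[i /existsP[r /andP[Fj /eqP c1]]] jC.
rewrite /extractable jC /=; apply/existsP; exists i; apply/existsP; exists r.
rewrite Fj /=.
have [x Ex] : exists x, [set j' in setT | F i r j'] = [set x] by apply/cards1P; rewrite c1.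
have jx : j = x by apply/set1P; rewrite -Ex !inE Fj.
apply/cards1P; exists j; apply/setP=> k; rewrite !inE.
apply/andP/eqP=> [[_ Fk]| ->]; last by rewrite jC Fj.
have : k \in [set x] by rewrite -Ex !inE Fk.
by rewrite jx => /set1P.
Qed.

Lemma peel_inv h NH f (F : state h NH f) k :
  ((#|iter k (peel_step F) setT| + k == f) ||
   [forall j, ~~ extractable F (iter k (peel_step F) setT) j]).
Proof.
elim: k => [|k IH]; first by rewrite addn0 cardsT card_ord eqxx.
rewrite iterS /peel_step; set C := iter k _ _.
case: pickP => [j ej | none].
  case/orP: IH => [/eqP e| /forallP/(_ j)]; last by rewrite ej.
  move: (ej) => /andP[jC _].
  have := cardsD1 j C; rewrite jC => ec.
  apply/orP; left; apply/eqP; rewrite ec add1n in e; by rewrite addnS -addSn.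
by apply/orP; right; apply/forallP=> j; rewrite none.
Qed.

Lemma arith_aux (T : finType) (A B : {set T}) :
  A \subset ~: B -> (#|B| <= #|T| - #|A|)%N.
Proof.
move=> /subset_leq_card; rewrite [#|~: B|]cardsCs setCK => le.
have hA : #|A| <= #|T| by rewrite -cardsT subset_leq_card ?subsetT.
have hB : #|B| <= #|T| by rewrite -cardsT subset_leq_card ?subsetT.
lia.
Qed.

Lemma peel_ext h NH f (F : state h NH f) :
  (#|[set j | extractable F setT j]| <= extracted F)%N.
Proof.
rewrite /extracted /remaining.
have := peel_inv F f; set C := iter f _ _; case/orP=> [/eqP e | /forallP H].
  have -> : #|C| = 0%N by lia.
  by rewrite subn0; apply: leq_trans (max_card _) (eq_leq (card_ord f)).
have sub : C \subset ~: [set j | extractable F setT j].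
  apply/subsetP=> j jC; rewrite !inE; apply/negP=> ej.
  by move: (H j); rewrite (extr_sub ej jC).
have := arith_aux sub; rewrite card_ord => le.
exact: le.
Qed.

Definition mat n m (g : {ffun 'I_m -> 'I_n}) : 'M[bool]_(n, m) :=
  \matrix_(r, j) (g j == r).
Definition fib (A Y : finType) (g : {ffun A -> Y}) (y : Y) := #|[set x | g x == y]|.
Definition nosing (A Y : finType) (g : {ffun A -> Y}) := [forall y, fib g y != 1%N].
Definition sing (A Y : finType) (g : {ffun A -> Y}) : {set A} :=
  [set x | fib g (g x) == 1%N].

Lemma mat_inj n m : injective (@mat n m).
Proof.
move=> g1 g2 e; apply/ffunP=> j; apply/eqP.
have := congr1 (fun M : 'M[bool]_(n, m) => M (g2 j) j) e; rewrite !mxE eqxx.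
by move=> ->.
Qed.

Lemma inS_mat n m (g : {ffun 'I_m -> 'I_n}) : inS (mat g).
Proof.
apply/forallP=> j; rewrite /colw; apply/cards1P; exists (g j).
by apply/setP=> r; rewrite !inE mxE eq_sym.
Qed.

Lemma inS_ex n m (M : 'M[bool]_(n, m)) : inS M -> exists g, M = mat g.
Proof.
move=> /forallP H.
have : forall j : 'I_m, exists r : 'I_n, [set i | M i j] = [set r].
  by move=> j; apply/cards1P; exact: H.
case/fin_all_exists=> u Hu; exists [ffun j => u j].
apply/matrixP=> r j; rewrite mxE ffunE.
have : (r \in [set i | M i j]) = (r \in [set u j]) by rewrite Hu.
by rewrite !inE eq_sym.
Qed.

Lemma card_inS_P n m (P : pred 'M[bool]_(n, m)) :
  #|[set M | inS M && P M]| = #|[set g : {ffun 'I_m -> 'I_n} | P (mat g)]|.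
Proof.
rewrite -(card_imset _ (@mat_inj n m)); apply: eq_card=> M; rewrite !inE.
apply/andP/imsetP=> [[/inS_ex [g ->] Pg] | [g]]; first by exists g; rewrite ?inE.
by rewrite inE => Pg ->; rewrite inS_mat.
Qed.

Lemma roww_mat n m (g : {ffun 'I_m -> 'I_n}) r : roww (mat g) r = fib g r.
Proof. by rewrite /roww /fib; apply: eq_card=> j; rewrite !inE mxE. Qed.

Lemma z_fun n m : z n m = #|[set g : {ffun 'I_m -> 'I_n} | nosing g]|.
Proof.
rewrite /z card_inS_P; apply: eq_card=> g; rewrite !inE.
by apply/eq_forallb=> r; rewrite roww_mat.
Qed.

Definition stmat h NH f (G : {ffun 'I_h -> {ffun 'I_f -> 'I_NH}}) : state h NH f :=
  [ffun i => mat (G i)].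

Lemma stmat_inj h NH f : injective (@stmat h NH f).
Proof.
move=> G1 G2 e; apply/ffunP=> i; apply: (@mat_inj NH f).
by have := congr1 (fun F : state h NH f => F i) e; rewrite !ffunE.
Qed.

Lemma card_inSh_P h NH f (P : pred (state h NH f)) :
  #|[set F | inSh F && P F]| =
  #|[set G : {ffun 'I_h -> {ffun 'I_f -> 'I_NH}} | P (stmat G)]|.
Proof.
rewrite -(card_imset _ (@stmat_inj h NH f)); apply: eq_card=> F; rewrite !inE.
apply/andP/imsetP=> [[/forallP H PF] | [G]].
  have : forall i, exists g, F i = mat g by move=> i; apply: inS_ex.
  case/fin_all_exists=> u Hu.
  have eF : F = stmat [ffun i => u i] by apply/ffunP=> i; rewrite !ffunE.
  by exists [ffun i => u i] => //; rewrite inE -eF.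
rewrite inE => PG ->; split => //; apply/forallP=> i; rewrite ffunE; exact: inS_mat.
Qed.

Lemma extr_stmat h NH f (G : {ffun 'I_h -> {ffun 'I_f -> 'I_NH}}) j :
  extractable (stmat G) setT j = (j \in \bigcup_i sing (G i)).
Proof.
rewrite /extractable in_setT /=; apply/existsP/bigcupP=> [[i /existsP[r]] | [i _]].
  rewrite ffunE mxE => /andP[/eqP e c]; exists i => //; rewrite inE /fib e.
  by rewrite -(eqP c); apply/eqP; apply: eq_card=> k; rewrite !inE mxE.
rewrite inE /fib => c; exists i; apply/existsP; exists (G i j).
rewrite ffunE mxE eqxx /= -(eqP c); apply/eqP; apply: eq_card=> k.
by rewrite !inE mxE.
Qed.

Section Sing.
Variables (T Y : finType) (B : {set T}).

Definition Qg (g : {ffun T -> Y}) :=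
  [&& [forall x1 in B, forall x2 in B, (g x1 == g x2) ==> (x1 == x2)],
      [forall x in ~: B, forall x' in B, g x != g x'] &
      [forall y, #|[set x in ~: B | g x == y]| != 1%N]].

Lemma fib_split (g : {ffun T -> Y}) y :
  fib g y = (#|[set x in B | g x == y]| + #|[set x in ~: B | g x == y]|)%N.
Proof.
rewrite /fib -(cardsID B); congr (_ + _)%N; apply: eq_card=> x; rewrite !inE andbC //.
Qed.

Lemma card1_eq (A : {set T}) x1 x2 : #|A| = 1%N -> x1 \in A -> x2 \in A -> x1 = x2.
Proof.
move=> /eqP/cards1P[x ->]; rewrite !inE => /eqP -> /eqP -> //.
Qed.

Lemma sing_Qg (g : {ffun T -> Y}) : (sing g == B) = Qg g.
Proof.
apply/eqP/and3P=> [sB | [/forallP I1 /forallP I2 /forallP I3]].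
  have sg x : x \in B -> fib g (g x) = 1%N by rewrite -sB inE => /eqP.
  split.
  - apply/forallP=> x1; apply/implyP=> x1B; apply/forallP=> x2; apply/implyP=> x2B.
    apply/implyP=> /eqP e; apply/eqP; apply: (card1_eq (sg _ x1B)); rewrite inE ?e //.
  - apply/forallP=> x; apply/implyP; rewrite inE => xB; apply/forallP=> x'.
    apply/implyP=> x'B; apply/negP=> /eqP e.
    have := card1_eq (sg _ x'B) (x1 := x) (x2 := x'); rewrite !inE e eqxx.
    by move=> /(_ isT isT) ex; rewrite ex x'B in xB.
  - apply/forallP=> y; apply/negP=> /eqP c1.
    have /cards1P[e Ee] : #|[set x in ~: B | g x == y]| == 1%N by rewrite c1.
    have : e \in [set x in ~: B | g x == y] by rewrite Ee inE.
    rewrite !inE => /andP[eB /eqP gey].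
    have : e \notin sing g by rewrite sB.
    rewrite inE fib_split gey c1 addn1 => ne.
    have : (0 < #|[set x in B | g x == y]|)%N by case: #|_| ne.
    case/card_gt0P=> d; rewrite inE => /andP[dB /eqP gdy].
    have := sg d dB; rewrite fib_split gdy c1 addn1.
    by case: #|_| ne.
apply/setP=> x; rewrite inE fib_split.
have c0 : #|[set x0 in B | g x0 == g x]| = (x \in B)%N.
  case xB: (x \in B).
    apply/eqP/cards1P; exists x; apply/setP=> x'; rewrite !inE.
    apply/andP/eqP=> [[x'B /eqP e]| ->]; last by rewrite xB.
    by move: (I1 x') => /implyP/(_ x'B)/forallP/(_ x)/implyP/(_ xB)/implyP/(_ (introT eqP e))/eqP.
  apply/eqP; rewrite cards_eq0; apply/eqP/setP=> x'; rewrite !inE.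
  apply/negP=> /andP[x'B /eqP e].
  move: (I2 x); rewrite inE xB => /implyP/(_ isT)/forallP/(_ x')/implyP/(_ x'B).
  by rewrite e eqxx.
rewrite c0; case xB: (x \in B).
  have c1 : #|[set x0 in ~: B | g x0 == g x]| = 0%N.
    apply/eqP; rewrite cards_eq0; apply/eqP/setP=> x'; rewrite !inE.
    apply/negP=> /andP[x'B /eqP e].
    move: (I2 x'); rewrite inE x'B => /implyP/(_ isT)/forallP/(_ x)/implyP/(_ xB).
    by rewrite e eqxx.
  by rewrite c1 eqxx.
by rewrite add0n (negbTE (I3 _)).
Qed.
End Sing.

Section L.
Variables (A Yt : finType) (Z : {set Yt}).

Definition Phi (g : {ffun 'I_#|A| -> 'I_#|Z|}) : {ffun A -> Yt} :=
  [ffun x => @enum_val Yt (mem Z) (g (enum_rank x))].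

Lemma Phi_inj : injective Phi.
Proof.
move=> g1 g2 e; apply/ffunP=> i; apply: (@enum_val_inj Yt (mem Z)).
have := congr1 (fun p : {ffun A -> Yt} => p (enum_val i)) e; rewrite !ffunE enum_valK.
by [].
Qed.

Lemma fib_Phi g r : fib (Phi g) (@enum_val Yt (mem Z) r) = fib g r.
Proof.
rewrite /fib -(card_imset _ (@enum_rank_inj A)); apply: eq_card=> i.
apply/imsetP/idP=> [[x]|]; first by rewrite !inE ffunE (inj_eq (@enum_val_inj _ _)) => e ->.
by rewrite inE => e; exists (enum_val i); rewrite ?enum_valK // inE ffunE enum_valK (eqP e).
Qed.

Lemma card_into_nosing :
  #|[set p : {ffun A -> Yt} | [forall x, p x \in Z] && nosing p]| = z #|Z| #|A|.
Proof.
rewrite z_fun -(card_imset _ Phi_inj); apply: eq_card=> p; rewrite inE.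
apply/idP/imsetP=> [/andP[/forallP pZ /forallP ns] | [g]].
  have : forall i : 'I_#|A|, exists r : 'I_#|Z|,
      @enum_val Yt (mem Z) r = p (enum_val i).
    by move=> i; exists (enum_rank_in (pZ (enum_val i)) (p (enum_val i)));
       rewrite enum_rankK_in.
  case/fin_all_exists=> u Hu.
  have ep : p = Phi [ffun i => u i].
    by apply/ffunP=> x; rewrite !ffunE Hu enum_rankK.
  exists [ffun i => u i] => //; rewrite inE; apply/forallP=> r.
  by rewrite -fib_Phi -ep.
rewrite inE => /forallP ns ->; apply/andP; split.
  by apply/forallP=> x; rewrite ffunE enum_valP.
apply/forallP=> y; case yZ: (y \in Z).
  by rewrite -(enum_rankK_in yZ yZ) fib_Phi.
rewrite /fib; apply/negP=> /eqP c.
have /card_gt0P[x] : (0 < #|[set x | Phi g x == y]|)%N by rewrite c.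
by rewrite inE ffunE => /eqP e; move: (enum_valP (g (enum_rank x))); rewrite e yZ.
Qed.
End L.

Lemma card_sigP (T : finType) (Pr P : pred T) :
  #|[set d : {x | Pr x} | P (val d)]| = #|[set x | Pr x && P x]|.
Proof.
rewrite -(card_imset _ val_inj); apply: eq_card=> x; rewrite inE.
apply/imsetP/andP=> [[d]|[px Px]]; first by rewrite inE => Pd ->; split=> //; exact: valP.
by exists (Sub x px); rewrite ?SubK // inE SubK.
Qed.

Section Count.
Variables (T Y : finType) (B : {set T}).
Local Notation D := {x : T | x \in B}.
Local Notation Dc := {x : T | x \in ~: B}.

Definition res (g : {ffun T -> Y}) : {ffun D -> Y} * {ffun Dc -> Y} :=
  ([ffun d => g (val d)], [ffun d => g (val d)]).

Definition Qp (p : {ffun D -> Y} * {ffun Dc -> Y}) :=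
  [&& injectiveb p.1, [forall d, p.2 d \notin codom p.1] & nosing p.2].

Lemma res_inj : injective res.
Proof.
move=> g1 g2 e; apply/ffunP=> x; case xB: (x \in B).
  have := congr1 (fun p : {ffun D -> Y} * {ffun Dc -> Y} => p.1 (Sub x xB)) e; rewrite /= !ffunE SubK //.
have xB' : x \in ~: B by rewrite inE xB.
have := congr1 (fun p : {ffun D -> Y} * {ffun Dc -> Y} => p.2 (Sub x xB')) e; rewrite /= !ffunE SubK //.
Qed.

Lemma Qg_res g : Qg B g = Qp (res g).
Proof.
rewrite /Qg /Qp /=; congr [&& _, _ & _].
- apply/forallP/injectiveP=> [H d1 d2 | H x1].
    rewrite !ffunE => e; apply: val_inj.
    by move: (H (val d1)) => /implyP/(_ (valP d1))/forallP/(_ (val d2))/implyP/(_ (valP d2))/implyP/(_ (introT eqP e))/eqP.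
  apply/implyP=> x1B; apply/forallP=> x2; apply/implyP=> x2B; apply/implyP=> /eqP e.
  have := H (Sub x1 x1B) (Sub x2 x2B); rewrite !ffunE !SubK => /(_ e) e'.
  by have := congr1 val e'; rewrite !SubK => ->.
- apply/forallP/forallP=> [H d | H x].
    apply/negP=> /codomP[d' e]; rewrite !ffunE in e.
    move: (H (val d)) => /implyP/(_ (valP d))/forallP/(_ (val d'))/implyP/(_ (valP d')).
    by rewrite e eqxx.
  apply/implyP=> xB; apply/forallP=> x'; apply/implyP=> x'B; apply/negP=> /eqP e.
  move: (H (Sub x xB)); rewrite ffunE SubK => /negP; apply; apply/codomP.
  by exists (Sub x' x'B); rewrite ffunE SubK.
- have E y : fib [ffun d : Dc => g (val d)] y = #|[set x in ~: B | g x == y]|.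
    rewrite /fib -(card_sigP (fun x => x \in ~: B) (fun x => g x == y)).
    by apply: eq_card => d; rewrite !inE ffunE.
  by apply/forallP/forallP=> H y; move: (H y); rewrite E.
Qed.

Lemma card_Qg_Qp : #|[set g : {ffun T -> Y} | Qg B g]| = #|[set p | Qp p]|.
Proof.
rewrite -(card_imset _ res_inj); apply: eq_card=> p; rewrite inE.
apply/imsetP/idP=> [[g]|Qpp]; first by rewrite inE Qg_res => H ->.
have : forall x, exists y : Y, (forall h : x \in B, y = p.1 (Sub x h)) /\
                               (forall h : x \in ~: B, y = p.2 (Sub x h)).
  move=> x; case/orP: (orbN (x \in B)) => xB.
    exists (p.1 (Sub x xB)); split=> h; first by congr (p.1 _); apply: val_inj; rewrite !SubK.
    by exfalso; move: (h); rewrite inE xB.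
  have xB' : x \in ~: B by rewrite inE xB.
  exists (p.2 (Sub x xB')); split=> h; last by congr (p.2 _); apply: val_inj; rewrite !SubK.
  by exfalso; move: (h) xB => ->.
case/fin_all_exists=> u Hu.
have ep : p = res [ffun x => u x].
  case: p Qpp Hu => p1 p2 Qpp Hu; rewrite /res; congr (_, _); apply/ffunP=> d; rewrite !ffunE.
    have [H _] := Hu (val d); rewrite (H (valP d)) /=; congr (p1 _); apply: val_inj; rewrite SubK //.
  have [_ H] := Hu (val d); rewrite (H (valP d)) /=; congr (p2 _); apply: val_inj; rewrite SubK //.
by exists [ffun x => u x]; rewrite // inE Qg_res -ep.
Qed.

Lemma card_Qg : #|[set g : {ffun T -> Y} | Qg B g]| =
  (#|Y| ^_ #|B| * z (#|Y| - #|B|) (#|T| - #|B|))%N.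
Proof.
rewrite card_Qg_Qp -sum1_card big_mkcond /=.
transitivity (\sum_(p1 : {ffun D -> Y}) \sum_(p2 : {ffun Dc -> Y})
   (if Qp (p1, p2) then 1 else 0))%N.
  by rewrite pair_bigA; apply: eq_bigr => -[a b] _; rewrite inE.
have cD : #|{: D}| = #|B| by rewrite card_sig; apply: eq_card=> x; rewrite !inE.
have cDc : #|{: Dc}| = (#|T| - #|B|)%N.
  rewrite card_sig (_ : #|[pred x | x \in ~: B]| = #|~: B|); first by rewrite cardsCs setCK.
  by apply: eq_card=> x; rewrite !inE.
have ci : (#|Y| ^_ #|B|)%N = #|[set q : {ffun D -> Y} | injectiveb q]|.
  by rewrite card_inj_ffuns cD.
rewrite ci -sum1_card big_distrl /= [RHS]big_mkcond /=.
apply: eq_bigr=> p1 _; rewrite inE.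
case: (boolP (injectiveb p1)) => ip1; last first.
  by apply: big1=> p2 _; rewrite /Qp /= (negbTE ip1).
have cZ : (#|Y| - #|B|)%N = #|[set y | y \notin codom p1]|.
  rewrite -cD -(card_codom (injectiveP _ ip1)) -[X in (_ - X)%N]cardsE.
  rewrite -(cardsC [set:: codom p1]) addKn; apply: eq_card=> y; rewrite !inE //.
rewrite mul1n -cDc cZ -card_into_nosing.
rewrite -sum1_card [RHS]big_mkcond /=; apply: eq_bigr=> p2 _.
rewrite inE /Qp /= ip1 /=.
have -> : [forall x, p2 x \in [set y | y \notin codom p1]] = [forall d, p2 d \notin codom p1].
  by apply: eq_forallb=> d; rewrite inE.
by [].
Qed.
End Count.

Lemma size_psi_seq b n : size (psi_seq b n) = n.+1.
Proof. by elim: n => [|n IH] //=; rewrite size_rcons IH. Qed.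

Lemma nth_psi_seq b n j : (j <= n)%N -> nth 0%R (psi_seq b n) j = Psi j b.
Proof.
elim: n => [|n IH]; first by rewrite leqn0 => /eqP ->.
rewrite leq_eqVlt => /orP[/eqP -> //| ltj].
by rewrite /= nth_rcons size_psi_seq ltj IH.
Qed.

Lemma prod_bin0 (b : seq nat) :
  (\prod_(bi <- b) ('C(0, bi))%:Z)%R = if all (fun bi => bi == 0%N) b then 1%R else 0%R.
Proof.
elim: b => [|a b IH]; first by rewrite big_nil.
rewrite big_cons IH bin0n /=; case: (a == 0%N) => /=; first by rewrite mul1r.
by rewrite mul0r.
Qed.

Lemma Psi_rec b e : Psi e b =
  (\prod_(bi <- b) ('C(e, bi))%:Z - \sum_(j < e) ('C(e, j))%:Z * Psi j b)%R.
Proof.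
case: e => [|n]; first by rewrite big_ord0 subr0 prod_bin0.
rewrite /Psi /= nth_rcons size_psi_seq ltnn eqxx /psi_next; congr (_ - _)%R.
by apply: eq_bigr=> j _; rewrite nth_psi_seq // -ltnS.
Qed.

Lemma prod_bool (I : finType) (P : pred I) :
  (\prod_(i : I) (P i : nat) = [forall i, P i] :> nat)%N.
Proof.
case: (boolP [forall i, P i]) => [/forallP H | /forallPn [i Pi]].
  by apply: big1=> i _; rewrite H.
by rewrite (bigD1 i) //= (negbTE Pi).
Qed.

Lemma Posz_prod (J : Type) (r : seq J) (F : J -> nat) :
  Posz (\prod_(j <- r) F j)%N = (\prod_(j <- r) Posz (F j))%R.
Proof. by elim: r => [|a r IH]; rewrite ?big_nil ?big_cons // PoszM IH. Qed.

Lemma Posz_sum (J : Type) (r : seq J) (P : pred J) (F : J -> nat) :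
  Posz (\sum_(j <- r | P j) F j)%N = (\sum_(j <- r | P j) Posz (F j))%R.
Proof.
by elim: r => [|a r IH]; rewrite ?big_nil ?big_cons //; case: (P a); rewrite ?PoszD IH.
Qed.

Section Cov.
Variables (I T : finType).

Definition cov (E : {set T}) (bn : I -> nat) :=
  #|[set Bs : {ffun I -> {set T}} | (\bigcup_i Bs i == E) && [forall i, #|Bs i| == bn i]]|.

Lemma cov_sub (E : {set T}) bn :
  (\prod_i 'C(#|E|, bn i) = \sum_(U : {set T} | U \subset E) cov U bn)%N.
Proof.
transitivity (\prod_i \sum_(A : {set T}) ((A \subset E) && (#|A| == bn i) : nat))%N.
  apply: eq_bigr=> i _; rewrite -cards_draws -sum1_card big_mkcond /=.
  by apply: eq_bigr=> A _; rewrite inE.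
rewrite bigA_distr_bigA /=.
under eq_bigr => Bs _ do rewrite prod_bool.
transitivity (\sum_(Bs : {ffun I -> {set T}} |
   [forall i, (Bs i \subset E) && (#|Bs i| == bn i)]) 1)%N.
  by rewrite [RHS]big_mkcond; apply: eq_bigr=> Bs _; case: [forall i, _].
rewrite (partition_big (fun Bs : {ffun I -> {set T}} => \bigcup_i Bs i) (fun U => U \subset E)) /=; last first.
  by move=> Bs /forallP H; apply/bigcupsP=> i _; case/andP: (H i).
apply: eq_bigr=> U UE; rewrite /cov -sum1_card; apply: eq_bigl=> Bs; rewrite inE.
case: (boolP (\bigcup_i Bs i == U)) => [/eqP eU | ]; rewrite ?andbF ?andbT //=.
apply: eq_forallb=> i.
by rewrite (subset_trans _ UE) // -eU (bigcup_sup i).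
Qed.

Lemma sum_by_size (E : {set T}) (F : {set T} -> nat) :
  (\sum_(U : {set T} | U \subset E) F U =
   \sum_(j < #|E|) \sum_(U : {set T} | (U \subset E) && (#|U| == j)) F U + F E)%N.
Proof.
rewrite (partition_big (fun U : {set T} => (inord #|U| : 'I_#|E|.+1)) xpredT) //=.
rewrite big_ord_recr /=; congr (_ + _)%N.
  apply: eq_bigr=> j _; apply: eq_bigl=> U.
  case: (boolP (U \subset E)) => //= UE.
  by rewrite -val_eqE /= inordK ?ltnS ?subset_leq_card.
rewrite (big_pred1 E) // => U.
case: (boolP (U \subset E)) => /= UE; last first.
  by apply/esym/negbTE; apply: contraNneq UE => ->.
rewrite -val_eqE /= inordK ?ltnS ?subset_leq_card //.
by rewrite eqEcard UE /= eqn_leq subset_leq_card.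
Qed.

Lemma cov_Psi bn (E : {set T}) :
  Posz (cov E bn) = Psi #|E| [seq bn i | i <- enum I].
Proof.
move: {2}#|E| (erefl #|E|) => e; elim/ltn_ind: e E => e IH E eE.
have := cov_sub E bn; rewrite sum_by_size eE => H.
rewrite Psi_rec.
have -> : (\prod_(bi <- [seq bn i | i <- enum I]) ('C(e, bi))%:Z)%R =
          Posz (\prod_i 'C(e, bn i))%N.
  rewrite big_map -Posz_prod big_enum /=; congr Posz; apply: eq_bigl=> i //.
rewrite H PoszD.
have HS : Posz (\sum_(j < e) \sum_(U : {set T} | (U \subset E) && (#|U| == j)) cov U bn)%N =
   (\sum_(j < e) ('C(e, j))%:Z * Psi j [seq bn i | i <- enum I])%R; last first.
  by rewrite HS addrAC subrr add0r.
rewrite Posz_sum; apply: eq_bigr=> j _.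
rewrite (_ : 'C(e, j) = #|[set U : {set T} | U \subset E & #|U| == j]|); last first.
  by rewrite cards_draws eE.
rewrite -sum1_card Posz_sum mulr_suml Posz_sum.
apply: eq_big => [U | U]; first by rewrite inE.
move=> /andP[UE /eqP cU]; rewrite mul1r (IH j) ?cU //.
Qed.
End Cov.

Lemma card_sumb (X : finType) (P : pred X) : #|[set x | P x]| = (\sum_x (P x : nat))%N.
Proof.
rewrite -sum1_card big_mkcond; apply: eq_bigr=> x _; rewrite inE; by case: (P x).
Qed.

Lemma sum_indic (X : finType) (P : pred X) (x0 : X) :
  (\sum_(x | P x) ((x == x0) : nat) = P x0)%N.
Proof.
case: (boolP (P x0)) => Px0.
  rewrite (bigD1 x0) //= eqxx big1 // => x /andP[_ /negbTE -> //].
by apply: big1=> x Px; case: eqP Px => // ->; rewrite (negbTE Px0).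
Qed.

Section Main.
Variables (I T Y : finType).

Lemma count_U (E : {set T}) :
  #|[set G : {ffun I -> {ffun T -> Y}} | \bigcup_i sing (G i) == E]| =
  (\sum_(Bs : {ffun I -> {set T}} | \bigcup_i Bs i == E)
      \prod_i #|[set g : {ffun T -> Y} | sing g == Bs i]|)%N.
Proof.
under [RHS]eq_bigr => Bs _ do under eq_bigr => i _ do rewrite card_sumb.
under [RHS]eq_bigr => Bs _ do rewrite bigA_distr_bigA /=.
rewrite exchange_big card_sumb; apply: eq_bigr=> G _.
pose B0 : {ffun I -> {set T}} := [ffun i => sing (G i)].
rewrite (eq_bigr (fun Bs => (Bs == B0 : nat))); last first.
  move=> Bs _; rewrite prod_bool; congr nat_of_bool.
  apply/forallP/eqP=> [H | ->]; last by move=> i; rewrite ffunE.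
  by apply/ffunP=> i; rewrite ffunE; apply/esym/eqP.
rewrite sum_indic; congr (nat_of_bool (_ == _)).
by apply: eq_bigr=> i _; rewrite ffunE.
Qed.

Definition W (k : nat) := (#|Y| ^_ k * z (#|Y| - k) (#|T| - k))%N.

Lemma cardW (B : {set T}) : #|[set g : {ffun T -> Y} | sing g == B]| = W #|B|.
Proof.
rewrite /W -card_Qg; apply: eq_card=> g; rewrite !inE sing_Qg //.
Qed.

Lemma sum_const_pred (X : finType) (P : pred X) c :
  (\sum_(x | P x) c = #|[set x | P x]| * c)%N.
Proof. by rewrite -sum_nat_const; apply: eq_bigl=> x; rewrite inE. Qed.

Lemma count_b (E : {set T}) :
  (\sum_(Bs : {ffun I -> {set T}} | \bigcup_i Bs i == E) \prod_i W #|Bs i| =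
   \sum_(b : {ffun I -> 'I_#|E|.+1}) cov E (fun i => (b i : nat)) * \prod_i W (b i))%N.
Proof.
rewrite (partition_big (fun Bs : {ffun I -> {set T}} =>
   [ffun i => (inord #|Bs i| : 'I_#|E|.+1)]) xpredT) //=.
apply: eq_bigr=> b _.
have key Bs : \bigcup_i Bs i == E ->
    ([ffun i => (inord #|Bs i| : 'I_#|E|.+1)] == b) = [forall i, #|Bs i| == b i].
  move=> /eqP eE; apply/eqP/forallP=> [<- i | H]; first by rewrite ffunE inordK // ltnS -eE subset_leq_card // (bigcup_sup i).
  by apply/ffunP=> i; rewrite ffunE (eqP (H i)) inord_val.
rewrite (eq_bigr (fun _ => \prod_i W (b i))); last first.
  move=> Bs /andP[eE]; rewrite key // => /forallP H.
  by apply: eq_bigr=> i _; rewrite (eqP (H i)).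
rewrite sum_const_pred; congr (_ * _)%N; apply: eq_card=> Bs; rewrite !inE.
by case: (boolP (\bigcup_i Bs i == E)) => //= eE; rewrite key.
Qed.

Lemma count_b' k (E : {set T}) : #|E| = k ->
  (\sum_(Bs : {ffun I -> {set T}} | \bigcup_i Bs i == E) \prod_i W #|Bs i| =
   \sum_(b : {ffun I -> 'I_k.+1}) cov E (fun i => (b i : nat)) * \prod_i W (b i))%N.
Proof. by move=> <-; exact: count_b. Qed.

Lemma count_e (e : nat) :
  #|[set G : {ffun I -> {ffun T -> Y}} | #|\bigcup_i sing (G i)| == e]| =
  (\sum_(E : {set T} | #|E| == e) \sum_(b : {ffun I -> 'I_e.+1})
      cov E (fun i => (b i : nat)) * \prod_i W (b i))%N.
Proof.
rewrite -sum1_card.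
rewrite (partition_big (fun G : {ffun I -> {ffun T -> Y}} => \bigcup_i sing (G i))
   (fun E : {set T} => #|E| == e)) /=; last by move=> G; rewrite inE.
apply: eq_bigr=> E /eqP eE.
rewrite -(count_b' eE).
under [RHS]eq_bigr => Bs _ do under eq_bigr => i _ do rewrite -cardW.
rewrite -count_U -sum1_card; apply: eq_bigl=> G; rewrite !inE.
by case: (boolP (_ == E)) => [/eqP ->|]; rewrite ?andbF // eE eqxx.
Qed.
End Main.

Lemma theta_le h NH f e :
  (Theta NH f h e <=
   Posz #|[set G : {ffun 'I_h -> {ffun 'I_f -> 'I_NH}} | #|\bigcup_i sing (G i)| == e]|)%R.
Proof.
rewrite count_e Posz_sum /Theta.
rewrite (_ : 'C(f, e) = #|[set E : {set 'I_f} | #|E| == e]|); last first.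
  by rewrite card_draws card_ord.
rewrite -sum1_card Posz_sum mulr_suml.
rewrite (eq_bigl (fun E : {set 'I_f} => #|E| == e)); last by move=> E; rewrite inE.
apply: ler_sum=> E /eqP eE.
rewrite mul1r Posz_sum big_mkcond /=; apply: ler_sum=> b _.
case: ifP => _; last exact: (ler0n _ _) || by [].
have := cov_Psi (fun i => (b i : nat)) E; rewrite eE => <-.
rewrite PoszM -Posz_prod.
rewrite (_ : (\prod_(i < h) ('C(NH, b i) * (b i)`! * z (NH - b i) (f - b i)))%N =
             (\prod_(i < h) W 'I_f 'I_NH (b i))%N) //.
by apply: eq_bigr=> i _; rewrite /W !card_ord bin_ffact.
Qed.

Lemma sum_count h NH f (Q : pred nat) :
  #|[set G : {ffun 'I_h -> {ffun 'I_f -> 'I_NH}} | Q #|\bigcup_i sing (G i)|]| =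
  (\sum_(e < f.+1 | Q e)
     #|[set G : {ffun 'I_h -> {ffun 'I_f -> 'I_NH}} | #|\bigcup_i sing (G i)| == e]|)%N.
Proof.
rewrite -sum1_card.
rewrite (partition_big (fun G : {ffun 'I_h -> {ffun 'I_f -> 'I_NH}} =>
    (inord #|\bigcup_i sing (G i)| : 'I_f.+1)) (fun e : 'I_f.+1 => Q e)) /=; last first.
  move=> G; rewrite inE inordK // ltnS.
  by apply: leq_trans (max_card _) (eq_leq (card_ord f)).
apply: eq_bigr=> e Qe; rewrite -sum1_card; apply: eq_bigl=> G; rewrite !inE.
have le : (#|\bigcup_i sing (G i)| < f.+1)%N.
  by rewrite ltnS; apply: leq_trans (max_card _) (eq_leq (card_ord f)).
rewrite -val_eqE /= inordK //.
by case: (boolP (_ == _)) => [/eqP ->|]; rewrite ?andbF ?Qe.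
Qed.

Unset Implicit Arguments. Set Strict Implicit.
Local Open Scope ring_scope.

Theorem theorem2 (Rt : realType) (h NH f : nat) (R : Rt) :
  (1 <= h)%N -> (1 <= NH)%N -> (1 <= f)%N -> 0 < R -> R <= 1 ->
  (#|[set F : state h NH f | inSh F && ((extracted F)%:R / f%:R < R)]|%:R
     / #|[set F : state h NH f | inSh F]|%:R : Rt)
  <= 1 - \sum_(e < f.+1 | Num.ceil (R * f%:R) <= (e : nat)%:Z)
            (Theta NH f h e)%:~R / (NH ^ (h * f))%:R.
Proof.
move=> h1 NH1 f1 R0 R1.
set P := fun F : state h NH f => (extracted F)%:R / f%:R < R.
set y := Num.ceil (R * f%:R).
have cN : #|[set F : state h NH f | inSh F]| = (NH ^ (h * f))%N.
  rewrite (_ : #|_| = #|[set F : state h NH f | inSh F && true]|); last first.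
    by apply: eq_card=> F; rewrite !inE andbT.
  rewrite card_inSh_P; rewrite (_ : #|_| = #|{ffun 'I_h -> {ffun 'I_f -> 'I_NH}}|); last first.
    by apply: eq_card=> G; rewrite inE.
  by rewrite !card_ffun !card_ord -expnM mulnC.
set A := #|[set F : state h NH f | inSh F && P F]|.
set Cc := #|[set F : state h NH f | inSh F && ~~ P F]|.
have eN : (A + Cc)%N = (NH ^ (h * f))%N.
  rewrite -cN -(cardsID [set F : state h NH f | P F]); congr (_ + _)%N.
    by apply: eq_card=> F; rewrite !inE.
  by apply: eq_card=> F; rewrite !inE andbC.
have fpos : (0 : Rt) < f%:R by rewrite ltr0n.
have key : forall G : {ffun 'I_h -> {ffun 'I_f -> 'I_NH}},
    y <= Posz #|\bigcup_i sing (G i)| -> ~~ P (stmat G).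
  move=> G yle; rewrite /P -leNgt ler_pdivlMr //.
  have le1 : (#|\bigcup_i sing (G i)| <= extracted (stmat G))%N.
    apply: leq_trans (peel_ext (stmat G)).
    by rewrite (eq_leq) //; apply: eq_card=> j; rewrite inE extr_stmat.
  have : y <= Posz (extracted (stmat G)) by apply: le_trans yle _; rewrite lez_nat.
  by rewrite /y Num.Theory.ceil_le_int.
have Cge : (\sum_(e < f.+1 | (y <= (e : nat)%:Z)%R)
     #|[set G : {ffun 'I_h -> {ffun 'I_f -> 'I_NH}} | #|\bigcup_i sing (G i)| == e]| <= Cc)%N.
  rewrite -(sum_count h NH f (fun e : nat => (y <= Posz e)%R)) /Cc card_inSh_P.
  apply: subset_leq_card; apply/subsetP=> G; rewrite !inE; exact: key.
have Tle : \sum_(e < f.+1 | y <= (e : nat)%:Z) Theta NH f h e <= Posz Cc.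
  apply: le_trans (_ : _ <= Posz (\sum_(e < f.+1 | (y <= (e : nat)%:Z)%R)
     #|[set G : {ffun 'I_h -> {ffun 'I_f -> 'I_NH}} | #|\bigcup_i sing (G i)| == e]|)%N) _.
    rewrite Posz_sum; apply: ler_sum=> e _; exact: theta_le.
  by rewrite lez_nat.
have Npos : (0 : Rt) < (NH ^ (h * f))%:R by rewrite ltr0n expn_gt0 NH1.
rewrite cN -mulr_suml -rmorph_sum.
rewrite -[X in X - _](@divff _ (NH ^ (h * f))%:R) ?gt_eqF // -mulrBl ler_pM2r ?invr_gt0 //.
have -> : (A%:R : Rt) = (Posz A)%:~R by [].
have -> : ((NH ^ (h * f))%:R : Rt) = (Posz (NH ^ (h * f)))%:~R by [].
rewrite -rmorphB ler_int -eN PoszD -addrA lerDl subr_ge0.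
exact: Tle.
Qed.
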